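(* Let $C$ be a Reedy category and let $\Gamma$ be one of $\int N(C)$, $\int N^{-,+}(C)$, $\int N^{--,+}_+(C)$. Let $(\alpha,\theta)\colon([m],X)\to([n],Y)$ be a morphism in $\Gamma$. Consider the order-preserving map $\mathrm{pr}\colon\{(\beta,\varphi)\in\mathrm{Hom}_\Gamma(([m],X),([n],Y)):(\alpha,\theta)\le(\beta,\varphi)\}\to\{\beta\in\mathrm{Hom}_\Delta([m],[n]):\alpha\le\beta\}$, $(\beta,\varphi)\mapsto\beta$. Then the image of $\mathrm{pr}$ has a largest element $\alpha'$, and $\mathrm{pr}$ is an order isomorphism onto the interval $\{\beta\in\mathrm{Hom}_\Delta([m],[n]):\alpha\le\beta\le\alpha'\}$.
   Context: A Reedy category $(C,C_-,C_+)$: wide subcategories with unique factorization of every morphism as ($C_-$ then $C_+$), membership in $C_\pm$ decidable, and the relation ($x<'y$ iff non-identity $x\to y$ in $C_+$ or non-identity $y\to x$ in $C_-$) well-founded. $\Delta$: finite ordinals $[n]$ and order-preserving maps, hom-sets ordered pointwise. $\int N(C)$: objects $([n],X)$ with $X\colon[n]\to C$ a functor; morphisms $([m],X)\to([n],Y)$ are $(\alpha,\theta)$, $\alpha\colon[m]\to[n]$ in $\Delta$, $\theta\colon X\Rightarrow Y\circ\alpha$; composition $(\beta,\varphi)\circ(\alpha,\theta)=(\beta\alpha,(\varphi\alpha)\circ\theta)$. $\int N^{-,+}(C)$: subcategory of objects with $X$ sending all morphisms into $C_-$ and morphisms with all $\theta_i\in C_+$. $\int N^{--,+}_+(C)$: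 its subcategory of objects whose $X$ reflects identities and morphisms with $\alpha$ injective. Order on hom-sets: $(\alpha,\theta)\le(\alpha',\theta')$ iff $\alpha\le\alpha'$ pointwise and $\theta'_i=Y(\alpha(i)\le\alpha'(i))\circ\theta_i$ for all $i$. *)

(* Defs.v *)
(* [n] is represented by 'I_n.+1. *)
From mathcomp Require Import all_boot.
Set Implicit Arguments. Unset Strict Implicit. Unset Printing Implicit Defensive.

Record category := Category {
  Ob :> Type;
  Hom : Ob -> Ob -> Type;
  idm : forall a, Hom a a;
  comp : forall a b c, Hom b c -> Hom a b -> Hom a c;   (* comp g f = g o f *)
  comp_idl : forall a b (f : Hom a b), comp (idm b) f = f;
  comp_idr : forall a b (f : Hom a b), comp f (idm a) = f;
  comp_assoc : forall a b c d (f : Hom a b) (g : Hom b c) (h : Hom c d),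
      comp h (comp g f) = comp (comp h g) f }.
Arguments Hom {_}.
Arguments idm {_}.
Arguments comp {_ _ _ _}.

Definition is_identity (C : category) (a b : C) (f : Hom a b) : Prop :=
  exists e : a = b, match e in _ = b' return Hom a b' with erefl => idm a end = f.

Record reedy (C : category) := Reedy {
  minus : forall a b : C, Hom a b -> bool;   (* decidable membership in C_- *)
  plus  : forall a b : C, Hom a b -> bool;   (* decidable membership in C_+ *)
  minus_id : forall a : C, minus (idm a);
  plus_id : forall a : C, plus (idm a);
  minus_comp : forall (a b c : C) (f : Hom a b) (g : Hom b c),
      minus f -> minus g -> minus (comp g f);
  plus_comp : forall (a b c : C) (f : Hom a b) (g : Hom b c),
      plus f -> plus g -> plus (comp g f);
  fact_ex : forall (a b : C) (f : Hom a b),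
      exists c (g : Hom a c) (h : Hom c b), [/\ minus g, plus h & comp h g = f];
  fact_uniq : forall (a b : C) (f : Hom a b) (c c' : C)
      (g : Hom a c) (h : Hom c b) (g' : Hom a c') (h' : Hom c' b),
      minus g -> plus h -> comp h g = f ->
      minus g' -> plus h' -> comp h' g' = f ->
      existT (fun c => (Hom a c * Hom c b)%type) c (g, h) =
      existT (fun c => (Hom a c * Hom c b)%type) c' (g', h');
  reedy_wf : well_founded (fun x y : C =>
      (exists f : Hom x y, plus f /\ ~ is_identity f) \/
      (exists f : Hom y x, minus f /\ ~ is_identity f)) }.
Arguments minus {_} _ {_ _}.
Arguments plus {_} _ {_ _}.

(* ---------- Functors [n] -> C (objects of the nerve) ---------- *)
Record diagram (C : category) (n : nat) := Diagram {
  dob : 'I_n.+1 -> C;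
  dmor : forall i j : 'I_n.+1, (i <= j)%N -> Hom (dob i) (dob j);
  dmor_id : forall (i : 'I_n.+1) (h : (i <= i)%N), dmor h = idm (dob i);
  dmor_comp : forall (i j k : 'I_n.+1) (h1 : (i <= j)%N) (h2 : (j <= k)%N)
      (h3 : (i <= k)%N), dmor h3 = comp (dmor h2) (dmor h1) }.
Arguments dmor {_ _} _ {_ _}.

Definition monotone (m n : nat) (a : 'I_m.+1 -> 'I_n.+1) : Prop :=
  forall i j : 'I_m.+1, (i <= j)%N -> (a i <= a j)%N.

Definition leD (m n : nat) (a b : 'I_m.+1 -> 'I_n.+1) : Prop :=
  forall i, (a i <= b i)%N.

Inductive gamma := IntN | IntNmp | IntNmmp_p.
(* IntN = \int N(C), IntNmp = \int N^{-,+}(C), IntNmmp_p = \int N^{--,+}_+(C) *)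

Definition reflects_identities (C : category) n (X : diagram C n) : Prop :=
  forall (i j : 'I_n.+1) (h : (i <= j)%N), is_identity (dmor X h) -> i = j.

Definition gamma_ob (C : category) (R : reedy C) (G : gamma) n (X : diagram C n)
  : Prop :=
  match G with
  | IntN => True
  | IntNmp => forall (i j : 'I_n.+1) (h : (i <= j)%N), minus R (dmor X h)
  | IntNmmp_p => (forall (i j : 'I_n.+1) (h : (i <= j)%N), minus R (dmor X h))
                 /\ reflects_identities X
  end.

(* (a, th) is a morphism ([m],X) -> ([n],Y) of \int N(C) *)
Definition is_hom (C : category) m n (X : diagram C m) (Y : diagram C n)
  (a : 'I_m.+1 -> 'I_n.+1) (th : forall i, Hom (dob X i) (dob Y (a i))) : Prop :=
  monotone a /\
  forall (i j : 'I_m.+1) (h : (i <= j)%N) (h' : (a i <= a j)%N),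
    comp (dmor Y h') (th i) = comp (th j) (dmor X h).

Arguments is_hom {C m n} X Y a th.

Definition gamma_hom (C : category) (R : reedy C) (G : gamma) m n
  (X : diagram C m) (Y : diagram C n)
  (a : 'I_m.+1 -> 'I_n.+1) (th : forall i, Hom (dob X i) (dob Y (a i))) : Prop :=
  match G with
  | IntN => is_hom X Y a th
  | IntNmp => is_hom X Y a th /\ forall i, plus R (th i)
  | IntNmmp_p => [/\ is_hom X Y a th, forall i, plus R (th i) & injective a]
  end.

Arguments gamma_hom {C} R G {m n} X Y a th.

Definition le_hom (C : category) m n (X : diagram C m) (Y : diagram C n)
  (a : 'I_m.+1 -> 'I_n.+1) (th : forall i, Hom (dob X i) (dob Y (a i)))
  (b : 'I_m.+1 -> 'I_n.+1) (ph : forall i, Hom (dob X i) (dob Y (b i))) : Prop :=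
  leD a b /\ forall i (h : (a i <= b i)%N), ph i = comp (dmor Y h) (th i).

Arguments le_hom {C m n} X Y a th b ph.

Definition upper_hom (C : category) (R : reedy C) (G : gamma) m n
  (X : diagram C m) (Y : diagram C n)
  (a : 'I_m.+1 -> 'I_n.+1) (th : forall i, Hom (dob X i) (dob Y (a i)))
  (b : 'I_m.+1 -> 'I_n.+1) (ph : forall i, Hom (dob X i) (dob Y (b i))) : Prop :=
  gamma_hom R G X Y b ph /\ le_hom X Y a th b ph.
Arguments upper_hom {C} R G {m n} X Y a th b ph.

(* Main.v *)
Require Import Defs.
From mathcomp Require Import all_boot.
From Stdlib Require Import Classical FunctionalExtensionality.
From mathcomp Require Import zify.
Set Implicit Arguments. Unset Strict Implicit. Unset Printing Implicit Defensive.
Local Notation comp := Defs.comp.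

Lemma wf_cycle (T : Type) (Rl : T -> T -> Prop) : well_founded Rl ->
  forall x y, Rl x y -> Rl y x -> False.
Proof.
move=> wf x; elim: (wf x) => {}x _ IH y Rxy Ryx.
exact: (IH y Ryx x Ryx Rxy).
Qed.

Lemma is_id_sig (C : category) (a c : C) (g : Hom a c) :
  existT (fun c => Hom a c) c g = existT (fun c => Hom a c) a (idm a) -> is_identity g.
Proof.
move=> H.
have K : forall s : {c : C & Hom a c},
    existT (fun c => Hom a c) a (idm a) = s -> is_identity (projT2 s).
  by move=> s E; case: s / E; exists erefl.
exact: (K _ (esym H)).
Qed.

Lemma cyc (C : category) (R : reedy C) (a c e : C) (x : Hom a c) (y : Hom c e) :
  minus R x -> minus R y -> is_identity (comp y x) -> is_identity x.
Proof.
move=> mx my [E]; move: y my; case: e / E => y my /= Eq.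
case: (classic (is_identity x)) => // nx.
case: (classic (is_identity y)) => [[E2 Ey]|ny].
  move: x y mx my nx Eq Ey; case: a / E2 => x y mx my nx Eq /= Ey.
  by exfalso; apply: nx; exists erefl; rewrite /= Eq -Ey comp_idl.
exfalso; apply: (wf_cycle (reedy_wf R) (x:=a) (y:=c)).
  by right; exists y.
by right; exists x.
Qed.

Lemma L2 (C : category) (R : reedy C) (a c b : C) (x : Hom a c) (k : Hom c b) :
  minus R x -> plus R (comp k x) -> is_identity x.
Proof.
move=> mx pk.
have [e [g [h [mg ph Ek]]]] := fact_ex R k.
have Eq : comp h (comp g x) = comp k x by rewrite comp_assoc Ek.
have U := fact_uniq (minus_id R a) pk (comp_idr _) (minus_comp mx mg) ph Eq.
have U2 := f_equal (fun s : {c : C & (Hom a c * Hom c b)%type} =>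
   existT (fun c => Hom a c) (projT1 s) (projT2 s).1) U.
apply: (cyc mx mg); apply: is_id_sig.
by rewrite /= in U2; rewrite -U2.
Qed.

Lemma L1 (C : category) (R : reedy C) (a b d : C) (f : Hom a b) (g : Hom b d) :
  minus R g -> plus R (comp g f) -> plus R f.
Proof.
move=> mg pgf.
have [c [g' [h [mg' ph Ef]]]] := fact_ex R f.
have : is_identity g'.
  apply: (L2 (k := comp g h)) mg' _.
  by rewrite -comp_assoc Ef.
case=> E; move: g' h mg' ph Ef; case: c / E => g' h _ ph Ef /= Eg.
by rewrite -Ef -Eg comp_idr.
Qed.

Lemma dmorE (C : category) n (Y : diagram C n) (i j : 'I_n.+1) (h h' : (i <= j)%N) :
  dmor Y h = dmor Y h'.
Proof. by rewrite (bool_irrelevance h h'). Qed.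

Lemma dmorC (C : category) n (Y : diagram C n) (i j k : 'I_n.+1)
  (h1 : (i <= j)%N) (h2 : (j <= k)%N) (h3 : (i <= k)%N) :
  comp (dmor Y h2) (dmor Y h1) = dmor Y h3.
Proof. by rewrite (dmor_comp Y h1 h2 h3). Qed.

Definition good (C : category) (R : reedy C) (G : gamma) m n
  (X : diagram C m) (Y : diagram C n)
  (a : 'I_m.+1 -> 'I_n.+1) (th : forall i, Hom (dob X i) (dob Y (a i)))
  (b : 'I_m.+1 -> 'I_n.+1) : Prop :=
  monotone b /\ leD a b /\
  (G <> IntN -> forall i (h : (a i <= b i)%N), plus R (comp (dmor Y h) (th i))).
Arguments good {C} R G {m n} X Y a th b.

Lemma is_hom_of (C : category) (R : reedy C) (G : gamma) m n
  (X : diagram C m) (Y : diagram C n) b (ph : forall i, Hom (dob X i) (dob Y (b i))) :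
  gamma_hom R G X Y b ph -> is_hom X Y b ph.
Proof. by case: G => // [[]|[]]. Qed.

Lemma plus_of (C : category) (R : reedy C) (G : gamma) m n
  (X : diagram C m) (Y : diagram C n) b (ph : forall i, Hom (dob X i) (dob Y (b i))) :
  G <> IntN -> gamma_hom R G X Y b ph -> forall i, plus R (ph i).
Proof. by case: G => // _ [] . Qed.

Lemma minus_ob (C : category) (R : reedy C) (G : gamma) n (Y : diagram C n) :
  G <> IntN -> gamma_ob R G Y -> forall i j : 'I_n.+1, forall (h : (i <= j)%N), minus R (dmor Y h).
Proof. case: G => /= nG; first by case: nG. by []. by case. Qed.

Lemma nat_of (C : category) m n
  (X : diagram C m) (Y : diagram C n)
  (a : 'I_m.+1 -> 'I_n.+1) (th : forall i, Hom (dob X i) (dob Y (a i)))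
  (b : 'I_m.+1 -> 'I_n.+1) :
  is_hom X Y a th -> monotone b -> forall H : leD a b,
  is_hom X Y b (fun i => comp (dmor Y (H i)) (th i)).
Proof.
move=> [ma Ha] mb H; split=> // i j h h'.
have haj := ma i j h.
rewrite comp_assoc (dmorC Y (H i) h' (leq_trans (H i) h')).
rewrite -comp_assoc -(Ha i j h haj) comp_assoc (dmorC Y haj (H j) (leq_trans haj (H j))).
by rewrite (dmorE Y (leq_trans haj (H j)) (leq_trans (H i) h')).
Qed.

Lemma inj_of (C : category) (R : reedy C) m n
  (X : diagram C m) (Y : diagram C n)
  (a : 'I_m.+1 -> 'I_n.+1) (th : forall i, Hom (dob X i) (dob Y (a i)))
  (b : 'I_m.+1 -> 'I_n.+1) :
  reflects_identities X -> (forall (i j : 'I_m.+1) (h : (i <= j)%N), minus R (dmor X h)) ->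
  is_hom X Y a th -> leD a b ->
  (forall i (h : (a i <= b i)%N), plus R (comp (dmor Y h) (th i))) ->
  injective b.
Proof.
move=> refl mX [ma Ha] H Hp.
have lt : forall i j : 'I_m.+1, (i < j)%N -> (b i < a j)%N.
  move=> i j ij; rewrite ltnNge; apply/negP => aj_bi.
  have hij : (i <= j)%N := ltnW ij.
  have aij := ma i j hij.
  have P := Hp i (H i).
  rewrite (dmorE Y (H i) (leq_trans aij aj_bi)) -(dmorC Y aij aj_bi (leq_trans aij aj_bi)) in P.
  rewrite -comp_assoc (Ha i j hij aij) comp_assoc in P.
  have := refl _ _ hij (L2 (mX _ _ hij) P).
  by move=> E; rewrite E ltnn in ij.
move=> i j E; case: (ltngtP i j) => [ij|ji|/val_inj //].
  by have := leq_trans (lt _ _ ij) (H j); rewrite E ltnn.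
by have := leq_trans (lt _ _ ji) (H i); rewrite E ltnn.
Qed.

Lemma good_upper (C : category) (R : reedy C) (G : gamma) m n
  (X : diagram C m) (Y : diagram C n)
  (a : 'I_m.+1 -> 'I_n.+1) (th : forall i, Hom (dob X i) (dob Y (a i)))
  (b : 'I_m.+1 -> 'I_n.+1) :
  gamma_ob R G X -> gamma_hom R G X Y a th -> good R G X Y a th b ->
  exists ph, upper_hom R G X Y a th b ph.
Proof.
move=> hX hA [mb [H Hp]].
exists (fun i => comp (dmor Y (H i)) (th i)).
split; last by split=> // i h; rewrite (dmorE Y h (H i)).
move: Hp hX hA; case: G => /= Hp hX hA.
- exact: nat_of.
- split; first by apply: nat_of => //; case: hA.
  by move=> i; apply: Hp.
- case: hA => hA _ _; case: hX => mX rX.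
  split; first exact: nat_of.
    by move=> i; apply: Hp.
  by apply: (inj_of rX mX hA H) => i h; apply: Hp.
Qed.

Lemma upper_good (C : category) (R : reedy C) (G : gamma) m n
  (X : diagram C m) (Y : diagram C n)
  (a : 'I_m.+1 -> 'I_n.+1) (th : forall i, Hom (dob X i) (dob Y (a i)))
  (b : 'I_m.+1 -> 'I_n.+1) ph :
  upper_hom R G X Y a th b ph -> good R G X Y a th b.
Proof.
case=> hb [H E]; split; first exact: (is_hom_of hb).1.
split=> // nG i h; rewrite -E; exact: plus_of nG hb i.
Qed.

Definition maxf m n (b d : 'I_m.+1 -> 'I_n.+1) : 'I_m.+1 -> 'I_n.+1 :=
  fun i => if (b i <= d i)%N then d i else b i.

Lemma plus_ext (C : category) (R : reedy C) m n
  (X : diagram C m) (Y : diagram C n)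
  (a : 'I_m.+1 -> 'I_n.+1) (th : forall i, Hom (dob X i) (dob Y (a i))) i
  (k1 k2 : 'I_n.+1) (E : k1 = k2) (h1 : (a i <= k1)%N) (h2 : (a i <= k2)%N) :
  plus R (comp (dmor Y h1) (th i)) = plus R (comp (dmor Y h2) (th i)).
Proof. by subst; rewrite (bool_irrelevance h1 h2). Qed.

Lemma good_max (C : category) (R : reedy C) (G : gamma) m n
  (X : diagram C m) (Y : diagram C n)
  (a : 'I_m.+1 -> 'I_n.+1) (th : forall i, Hom (dob X i) (dob Y (a i)))
  (b d : 'I_m.+1 -> 'I_n.+1) :
  good R G X Y a th b -> good R G X Y a th d -> good R G X Y a th (maxf b d).
Proof.
move=> [mb [Hb Pb]] [md [Hd Pd]]; split.
  move=> i j ij; rewrite /maxf; have := mb i j ij; have := md i j ij.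
  by do 2 case: ifP => ?; lia.
split.
  by move=> i; rewrite /maxf; have := Hb i; have := Hd i; case: ifP => ?; lia.
move=> nG i h.
have [E|E] : maxf b d i = d i \/ maxf b d i = b i by rewrite /maxf; case: ifP; auto.
  by rewrite (@plus_ext _ R _ _ _ Y a th i _ _ E h (Hd i)); apply: Pd.
by rewrite (@plus_ext _ R _ _ _ Y a th i _ _ E h (Hb i)); apply: Pb.
Qed.

Lemma good_down (C : category) (R : reedy C) (G : gamma) m n
  (X : diagram C m) (Y : diagram C n)
  (a : 'I_m.+1 -> 'I_n.+1) (th : forall i, Hom (dob X i) (dob Y (a i)))
  (b b' : 'I_m.+1 -> 'I_n.+1) :
  gamma_ob R G Y ->
  good R G X Y a th b' -> monotone b -> leD a b -> leD b b' -> good R G X Y a th b.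
Proof.
move=> hY [_ [_ Pb']] mb ab bb'; split=> //; split=> // nG i h.
have P := Pb' nG i (leq_trans h (bb' i)).
rewrite -(dmorC Y h (bb' i) (leq_trans h (bb' i))) -comp_assoc in P.
exact: L1 (minus_ob nG hY _) P.
Qed.

Lemma ex_max (P : nat -> Prop) k0 N : P k0 -> (forall k, P k -> k <= N) ->
  exists k, P k /\ forall j, P j -> j <= k.
Proof.
move=> P0 bnd; apply: NNPP => nex.
have step : forall k, P k -> exists j, P j /\ k < j.
  move=> k Pk; apply: NNPP => ne; apply: nex; exists k; split=> // j Pj.
  rewrite leqNgt; apply/negP => kj; apply: ne; by exists j.
have : forall t, exists k, P k /\ t <= k.
  elim=> [|t [k [Pk tk]]]; first by exists k0.
  have [j [Pj kj]] := step k Pk; exists j; split=> //; exact: leq_ltn_trans tk kj.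
move=> /(_ N.+1) [k [Pk]]; by rewrite leqNgt ltnS (bnd k Pk).
Qed.

Lemma sum_lt m (f g : 'I_m.+1 -> nat) i : (forall j, f j <= g j) -> f i < g i ->
  \sum_(j < m.+1) f j < \sum_(j < m.+1) g j.
Proof.
move=> fg fgi; rewrite (bigD1 i) //= [X in _ < X](bigD1 i) //= -addSn.
by apply: leq_add => //; apply: leq_sum => j _.
Qed.

Theorem proposition4p4 (C : category) (R : reedy C) (G : gamma) (m n : nat)
  (X : diagram C m) (Y : diagram C n)
  (a : 'I_m.+1 -> 'I_n.+1) (th : forall i, Hom (dob X i) (dob Y (a i))) :
  gamma_ob R G X -> gamma_ob R G Y -> gamma_hom R G X Y a th ->
  exists a' : 'I_m.+1 -> 'I_n.+1,
    (* a' lies in the image of pr ... *)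
    (exists ph' : forall i, Hom (dob X i) (dob Y (a' i)), upper_hom R G X Y a th a' ph') /\
    (* ... and is its largest element *)
    (forall b ph, upper_hom R G X Y a th b ph -> leD b a') /\
    (* pr maps onto the interval {b : a <= b <= a'} of Hom_Delta([m],[n]) *)
    (forall b : 'I_m.+1 -> 'I_n.+1, monotone b -> leD a b -> leD b a' ->
       exists ph, upper_hom R G X Y a th b ph) /\
    (* pr is injective *)
    (forall b ph ph', upper_hom R G X Y a th b ph -> upper_hom R G X Y a th b ph' -> ph = ph') /\
    (* pr preserves and reflects the order *)
    (forall b ph b' ph', upper_hom R G X Y a th b ph -> upper_hom R G X Y a th b' ph' ->
       (le_hom X Y b ph b' ph' <-> leD b b')).
Proof.
move=> hX hY hA.
pose S (b : 'I_m.+1 -> 'I_n.+1) := \sum_(i < m.+1) (b i : nat).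
pose P k := exists b, good R G X Y a th b /\ S b = k.
have ga : good R G X Y a th a.
  split; first exact: (is_hom_of hA).1.
  split=> // nG i h; rewrite (dmor_id Y h) comp_idl; exact: plus_of nG hA i.
have bnd : forall k, P k -> k <= \sum_(i < m.+1) n.
  by move=> k [b [_ <-]]; apply: leq_sum => i _; apply: leq_ord.
have [k [[a' [ga' Ek]] kmax]] := @ex_max P (S a) (\sum_(i < m.+1) n)
   (ex_intro _ a (conj ga erefl)) bnd.
exists a'.
have upmax : forall b, good R G X Y a th b -> leD b a'.
  move=> b gb i; rewrite leqNgt; apply/negP => lt.
  have gc := good_max ga' gb.
  have := kmax _ (ex_intro _ (maxf a' b) (conj gc erefl)).
  rewrite -Ek leqNgt (@sum_lt m (fun j => a' j : nat) (fun j => maxf a' b j : nat) i) //.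
  all: rewrite /maxf.
  all: try (by rewrite (ltnW lt)).
  all: try (by move=> j; case: ifP => // /negbT; rewrite -ltnNge => /ltnW).
split; first exact: good_upper.
split; first by move=> b ph /upper_good; apply: upmax.
split.
  by move=> b mb ab ba'; apply: good_upper => //; apply: (good_down hY ga').
split.
  move=> b ph ph' [_ [H E]] [_ [_ E']]; apply: functional_extensionality_dep => i.
  by rewrite (E i (H i)) (E' i (H i)).
move=> b ph b' ph' [_ [H E]] [_ [H' E']]; split; first by case.
move=> bb'; split=> // i h.
by rewrite (E' i (H' i)) (E i (H i)) comp_assoc (dmorC Y (H i) h (H' i)).
Qed.
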